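(* Let $m\ge 8$ be an even integer. There do not exist a graph $G=(V,E)$ with $|V|=m$ and a function $h:E\to\{0,1\}$ such that simultaneously (1) there are at least $\dfrac{2^m}{2^{\lceil\log_2 m\rceil}}$ colourings of $G$ according to $h$, and (2) $G$ contains a connected component with more than $\frac{m}{2}$ vertices.
   Context: Given a graph $G=(V,E)$ and a function $h:E\to\{0,1\}$, a colouring of $G$ according to $h$ is a function $c:V\to\{0,1\}$ such that $c(u)\oplus c(v)=h(\{u,v\})$ for every edge $\{u,v\}\in E$. A connected component of a graph is a nonempty maximal connected induced subgraph; its cardinality is its number of vertices. *)

(* Defs.v *)
From mathcomp Require Import all_boot.
Set Implicit Arguments. Unset Strict Implicit. Unset Printing Implicit Defensive.

Definition simple_graph (T : finType) (e : rel T) : Prop :=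
  symmetric e /\ irreflexive e.

(* h : E -> {0,1} is represented as a function on 2-element vertex sets
   {u,v}; only its values on edges matter. *)
Definition is_colouring (T : finType) (e : rel T) (h : {set T} -> bool)
  (c : {ffun T -> bool}) : bool :=
  [forall u, forall v, e u v ==> (c u (+) c v == h [set u; v])].

Definition colourings (T : finType) (e : rel T) (h : {set T} -> bool) :
  {set {ffun T -> bool}} := [set c | is_colouring e h c].

Definition component (T : finType) (e : rel T) (x : T) : {set T} :=
  [set y | connect e x y].

(* Main.v *)
Require Import Defs.
From mathcomp Require Import all_boot.
From mathcomp Require Import zify.

Lemma aux_pow n : 4 <= n -> 2 * n <= 2 ^ n.-1.
Proof.
elim: n => // n IH H.
case: (ltngtP n 4) => Hn.
- have -> : n = 3 by lia. by [].
- have := IH (ltnW Hn). case: n Hn {IH H} => // n' _ /=. rewrite expnS. lia.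
- subst n. by [].
Qed.

Lemma col_bound (T : finType) (e : rel T) (h : {set T} -> bool) (x : T) :
  symmetric e ->
  #|colourings e h| <= 2 ^ (1 + (#|T| - #|component e x|)).
Proof.
move=> Hsym.
set K := component e x.
set f := fun c : {ffun T -> bool} => [set y in x |: ~: K | c y].
have Hinj : {in colourings e h &, injective f}.
  move=> c1 c2; rewrite !inE => H1 H2 Hf.
  apply/ffunP => y.
  have Hd : forall z, z \in x |: ~: K -> c1 z = c2 z.
    move=> z Hz.
    have := congr1 (fun S : {set T} => z \in S) Hf; rewrite /f !inE.
    move: Hz; rewrite !inE => -> /=. by move=> /eqP; case: (c1 z); case: (c2 z).
  case Hy: (y \in K); last by apply: Hd; rewrite in_setU1 in_setC Hy orbT.
  set a := [pred z | c1 z (+) c2 z == c1 x (+) c2 x].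
  have Hcl : closed e a.
    move=> u v Huv; rewrite !inE.
    move/forallP/(_ u)/forallP/(_ v): H1; rewrite Huv /= => /eqP E1.
    move/forallP/(_ u)/forallP/(_ v): H2; rewrite Huv /= => /eqP E2.
    move: E1 E2; case: (c1 u); case: (c1 v); case: (c2 u); case: (c2 v);
      case: (h [set u; v]) => //=.
  have Hxy : connect e x y by move: Hy; rewrite inE.
  have := closed_connect Hcl Hxy; rewrite !inE eqxx /= => /esym/eqP.
  rewrite (Hd x); last by rewrite !inE eqxx.
  by case: (c1 y); case: (c2 y); case: (c2 x).
rewrite -(card_in_imset Hinj).
have Hsub : f @: colourings e h \subset powerset (x |: ~: K).
  apply/subsetP => S /imsetP [c _ ->]; rewrite inE.
  by apply/subsetP => z; rewrite inE => /andP[].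
apply: (leq_trans (subset_leq_card Hsub)).
rewrite card_powerset cardsU1 in_setC negbK.
have -> : x \in K by rewrite inE connect0.
rewrite [#|~: K|](_ : _ = #|T| - #|K|) //.
by have := cardsC K; lia.
Qed.

Theorem theorem2 (m : nat) (Hm8 : 8 <= m) (Hev : ~~ odd m) :
  ~ exists (T : finType) (e : rel T) (h : {set T} -> bool),
      [/\ #|T| = m, simple_graph e,
          2 ^ m <= #|colourings e h| * 2 ^ up_log 2 m
        & exists x : T, m < 2 * #|component e x|].
Proof.
move=> [T [e [h [HT [Hsym _] Hc [x Hx]]]]].
have Hb := @col_bound T e h x Hsym.
have Hk := max_card (component e x).
move: Hc Hb Hx Hk; rewrite HT.
set k := #|component e x|.
move: (odd_double_half m); rewrite (negbTE Hev) add0n => Em.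
set n := m./2 in Em *.
have Hn : 4 <= n by lia.
have Hu : up_log 2 m <= n.-1.
  apply: up_log_min => //. rewrite -Em -mul2n. exact: aux_pow.
move=> Hc Hb Hx Hk.
have H2 : 2 ^ m <= 2 ^ (1 + (m - k) + up_log 2 m).
  rewrite expnD. apply: (leq_trans Hc). by rewrite leq_mul2r Hb orbT.
rewrite leq_exp2l // in H2.
lia.
Qed.
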